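(* For every type $\tau\in\mathbb{T}_C$, the type $\bigcap\mathbb{P}(\tau)$ is organized and $\bigcap\mathbb{P}(\tau)=\tau$.
   Context: Types $\mathbb{T}_C\ni\tau ::= a\mid\alpha\mid\omega\mid\tau_1\to\tau_2\mid\tau_1\cap\tau_2\mid c(\tau)$ ($a$ constants, $\alpha$ type variables, $c$ unary constructors). Subtyping $\le$: least preorder with $\sigma\le\omega$; $\omega\le\omega\to\omega$; $\sigma\cap\tau\le\sigma$; $\sigma\cap\tau\le\tau$; $\sigma\le\tau_1,\sigma\le\tau_2\Rightarrow\sigma\le\tau_1\cap\tau_2$; $(\sigma\to\tau_1)\cap(\sigma\to\tau_2)\le\sigma\to\tau_1\cap\tau_2$; $\sigma_2\le\sigma_1,\tau_1\le\tau_2\Rightarrow\sigma_1\to\tau_1\le\sigma_2\to\tau_2$; $\tau_1\le\tau_2\Rightarrow c(\tau_1)\le c(\tau_2)$; $c(\tau_1)\cap c(\tau_2)\le c(\tau_1\cap\tau_2)$; $=$ means $\le$ in both directions. Paths: $\pi ::= a\mid\alpha\mid\sigma\to\pi\mid c(\omega)\mid c(\pi)$. $\mathbb{P}(a)=\{a\}$, $\mathbb{P}(\alpha)=\{\alpha\}$, $\mathbb{P}(\omega)=\emptyset$, $\mathbb{P}(\sigma\to\tau)=\{\sigma\to\pi\mid\pi\in\mathbb{P}(\tau)\}$, $\mathbb{P}(\sigma\cap\tau)=\mathbb{P}(\sigma)\cup\mathbb{P}(\tau)$, $\mathbb{P}(c(\tau))=\{c(\omega)\}$ if $\mathbb{P}(\tau)=\emptyset$,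 else $\{c(\pi)\mid\pi\in\mathbb{P}(\tau)\}$. A type is organized if it is of the form $\bigcap_{i\in I}\pi_i$ with all $\pi_i$ paths. $\bigcap\mathbb{P}(\tau)$ denotes $\pi_1\cap\cdots\cap\pi_n$ where $\mathbb{P}(\tau)=\{\pi_1,\ldots,\pi_n\}$, and $\omega$ if $\mathbb{P}(\tau)=\emptyset$. *)

(* Defs.v *)
From Stdlib Require Import List.
Import ListNotations.
Set Implicit Arguments.

Section Types.
(* A : type constants a, V : type variables alpha, C : unary constructors c *)
Variables (A V C : Type).

Inductive ty : Type :=
| TConst : A -> ty
| TVar   : V -> ty
| TOmega : ty
| TArrow : ty -> ty -> ty
| TInter : ty -> ty -> ty
| TCtor  : C -> ty -> ty.

Inductive sub : ty -> ty -> Prop :=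
| sub_refl  : forall s, sub s s
| sub_trans : forall s t u, sub s t -> sub t u -> sub s u
| sub_omega : forall s, sub s TOmega
| sub_omega_arrow : sub TOmega (TArrow TOmega TOmega)
| sub_inter_l : forall s t, sub (TInter s t) s
| sub_inter_r : forall s t, sub (TInter s t) t
| sub_glb : forall s t1 t2, sub s t1 -> sub s t2 -> sub s (TInter t1 t2)
| sub_arrow_inter : forall s t1 t2,
    sub (TInter (TArrow s t1) (TArrow s t2)) (TArrow s (TInter t1 t2))
| sub_arrow : forall s1 s2 t1 t2, sub s2 s1 -> sub t1 t2 ->
    sub (TArrow s1 t1) (TArrow s2 t2)
| sub_ctor : forall c t1 t2, sub t1 t2 -> sub (TCtor c t1) (TCtor c t2)
| sub_ctor_inter : forall c t1 t2,
    sub (TInter (TCtor c t1) (TCtor c t2)) (TCtor c (TInter t1 t2)).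

Definition ty_eq (s t : ty) : Prop := sub s t /\ sub t s.

Inductive is_path : ty -> Prop :=
| path_const : forall a, is_path (TConst a)
| path_var : forall x, is_path (TVar x)
| path_arrow : forall s p, is_path p -> is_path (TArrow s p)
| path_ctor_omega : forall c, is_path (TCtor c TOmega)
| path_ctor : forall c p, is_path p -> is_path (TCtor c p).

(* P(tau), as a list enumerating the set of paths *)
Fixpoint paths (t : ty) : list ty :=
  match t with
  | TConst a => [TConst a]
  | TVar x => [TVar x]
  | TOmega => []
  | TArrow s u => map (TArrow s) (paths u)
  | TInter s u => paths s ++ paths u
  | TCtor c u =>
      match paths u with
      | [] => [TCtor c TOmega]
      | ps => map (TCtor c) ps
      end
  end.

Fixpoint bigcap (ps : list ty) : ty :=
  match ps with
  | [] => TOmega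
  | [p] => p
  | p :: ps' => TInter p (bigcap ps')
  end.

Definition organized (t : ty) : Prop :=
  exists ps : list ty, Forall is_path ps /\ t = bigcap ps.

End Types.

(* Main.v *)
Require Import Defs.
From Stdlib Require Import List.
Import ListNotations.

Lemma eq_refl' {A V C} (s : ty A V C) : ty_eq s s.
Proof. split; apply sub_refl. Qed.
Lemma eq_sym' {A V C} (s t : ty A V C) : ty_eq s t -> ty_eq t s.
Proof. intros [h1 h2]; split; auto. Qed.
Lemma eq_trans' {A V C} (s t u : ty A V C) : ty_eq s t -> ty_eq t u -> ty_eq s u.
Proof. intros [h1 h2] [h3 h4]; split; eapply sub_trans; eauto. Qed.
Lemma eq_inter {A V C} (s t s' t' : ty A V C) : ty_eq s s' -> ty_eq t t' ->
  ty_eq (TInter s t) (TInter s' t').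
Proof.
  intros [h1 h2] [h3 h4]; split; apply sub_glb;
  (eapply sub_trans; [apply sub_inter_l || apply sub_inter_r|]; assumption) ||
  (eapply sub_trans; [apply sub_inter_r|]; assumption).
Qed.
Lemma eq_arrow {A V C} (s t t' : ty A V C) : ty_eq t t' ->
  ty_eq (TArrow s t) (TArrow s t').
Proof. intros [h1 h2]; split; apply sub_arrow; auto using sub_refl. Qed.
Lemma eq_ctor {A V C} c (t t' : ty A V C) : ty_eq t t' ->
  ty_eq (TCtor c t) (TCtor c t').
Proof. intros [h1 h2]; split; apply sub_ctor; auto. Qed.
Lemma inter_omega_l {A V C} (t : ty A V C) : ty_eq (TInter (TOmega _ _ _) t) t.
Proof. split. apply sub_inter_r. apply sub_glb; auto using sub_omega, sub_refl. Qed.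
Lemma inter_omega_r {A V C} (t : ty A V C) : ty_eq t (TInter t (TOmega _ _ _)).
Proof. split. apply sub_glb; auto using sub_omega, sub_refl. apply sub_inter_l. Qed.
Lemma inter_assoc {A V C} (a b c : ty A V C) :
  ty_eq (TInter a (TInter b c)) (TInter (TInter a b) c).
Proof.
  split; repeat apply sub_glb; try apply sub_inter_l; try apply sub_inter_r;
  try (eapply sub_trans; [apply sub_inter_r|]; first [apply sub_inter_l|apply sub_inter_r]);
  try (eapply sub_trans; [apply sub_inter_l|]; first [apply sub_inter_l|apply sub_inter_r]).
Qed.

Lemma bigcap_cons {A V C} (p : ty A V C) l :
  ty_eq (bigcap (p :: l)) (TInter p (bigcap l)).
Proof. destruct l; simpl. apply inter_omega_r. apply eq_refl'. Qed.

Lemma bigcap_app {A V C} (l1 l2 : list (ty A V C)) :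
  ty_eq (bigcap (l1 ++ l2)) (TInter (bigcap l1) (bigcap l2)).
Proof.
  induction l1 as [|p l1 IH]; simpl app.
  - apply eq_sym', inter_omega_l.
  - eapply eq_trans'. apply bigcap_cons.
    eapply eq_trans'. apply eq_inter. apply eq_refl'. apply IH.
    eapply eq_trans'. apply inter_assoc.
    apply eq_inter. apply eq_sym', bigcap_cons. apply eq_refl'.
Qed.

Lemma bigcap_arrow {A V C} s (l : list (ty A V C)) :
  ty_eq (bigcap (map (TArrow s) l)) (TArrow s (bigcap l)).
Proof.
  induction l as [|p l IH]; simpl map.
  - simpl; split. eapply sub_trans. apply sub_omega_arrow.
    apply sub_arrow; apply sub_omega. apply sub_omega.
  - eapply eq_trans'. apply bigcap_cons.
    eapply eq_trans'. apply eq_inter. apply eq_refl'. apply IH.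
    eapply eq_trans'. 2: apply eq_arrow, eq_sym', bigcap_cons.
    split. apply sub_arrow_inter.
    apply sub_glb; apply sub_arrow; auto using sub_refl, sub_inter_l, sub_inter_r.
Qed.

Lemma bigcap_ctor {A V C} c (p : ty A V C) l :
  ty_eq (bigcap (map (TCtor c) (p :: l))) (TCtor c (bigcap (p :: l))).
Proof.
  revert p; induction l as [|q l IH]; intro p.
  - apply eq_refl'.
  - change (ty_eq (TInter (TCtor c p) (bigcap (map (TCtor c) (q :: l))))
                  (TCtor c (TInter p (bigcap (q :: l))))).
    eapply eq_trans'. apply eq_inter. apply eq_refl'. apply IH.
    split. apply sub_ctor_inter.
    apply sub_glb; apply sub_ctor; auto using sub_inter_l, sub_inter_r.
Qed.

Lemma paths_are_paths {A V C} (t : ty A V C) : Forall (@is_path A V C) (paths t).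
Proof.
  induction t; simpl.
  - repeat constructor.
  - repeat constructor.
  - constructor.
  - rewrite Forall_map. eapply Forall_impl; [|exact IHt2]. intros; constructor; auto.
  - apply Forall_app; auto.
  - destruct (paths t) eqn:E.
    + repeat constructor.
    + change (Forall (@is_path A V C) (map (TCtor c) (t0 :: l))).
      rewrite Forall_map. eapply Forall_impl; [|exact IHt]. intros; constructor; auto.
Qed.

Lemma paths_eq {A V C} (t : ty A V C) : ty_eq (bigcap (paths t)) t.
Proof.
  induction t; simpl.
  - apply eq_refl'.
  - apply eq_refl'.
  - apply eq_refl'.
  - eapply eq_trans'. apply bigcap_arrow. split; apply sub_arrow;
    try apply sub_refl; apply IHt2.
  - eapply eq_trans'. apply bigcap_app. apply eq_inter; auto.
  - destruct (paths t) eqn:E.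
    + simpl. apply eq_ctor. apply IHt.
    + eapply eq_trans'. apply bigcap_ctor. apply eq_ctor. apply IHt.
Qed.

Theorem lemma4p8 (A V C : Type) (t : ty A V C) :
  organized (bigcap (paths t)) /\ ty_eq (bigcap (paths t)) t.
Proof.
  split.
  - exists (paths t). split; auto using paths_are_paths.
  - apply paths_eq.
Qed.
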